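(* In the setting below: (1) If $f,g:X\to Y$ are $\Gamma$-equivariant with $d_p(f,g)<\infty$, then $f\in B(X,Y)$ if and only if $g\in B(X,Y)$. (2) If $f\in B(X,Y)$ then $\mathcal E^{(p)}_{\mu^n}(f)<\infty$ for all $n\ge1$.
   Context: Let $p\ge2$ and $(Y,d_Y)$ a complete geodesic metric space which is $p$-uniformly convex with constant $c_Y>0$ (i.e. $d_Y(x,\gamma(t))^p\le(1-t)d_Y(x,y)^p+t\,d_Y(x,z)^p-c_Y^pt(1-t)d_Y(y,z)^p$ for all $x,y,z$, constant-speed geodesics $\gamma$ from $y$ to $z$, $t\in[0,1]$). Let $\Gamma$ be a discrete group acting freely on a discrete set $X$ and by isometries on $Y$. A random walk $\mu$ on $X$ assigns to each $x$ a finitely supported probability measure $\mu(x\to\cdot)$; assume $\mu$ is $\Gamma$-equivariant ($\mu(\gamma x\to\gamma x')=\mu(x\to x')$). $\mu^1=\mu$, $\mu^{n+1}(x\to x'')=\sum_{x'}\mu^n(x\to x')\mu(x'\to x'')$. Let $\bar\nu$ be a probability measure on $\Gamma\backslash X$, $\nu(\{x\})=\bar\nu(\{\Gamma x\})$, and assume reversibility $\nu(x)\mu(x\to x')=\nu(x')\mu(x'\to x)$. For equivariant $f$ and equivariant random walk $\eta$: $\mathcal E^{(p)}_\eta(f)=\frac12\int_{\Gamma\backslash X}\sum_{x'}\eta(x\to x')d_Y(f(x),f(x'))^p\,d\bar\nu(x)$. $B(X,Y)$ = equivariant $f$ with $\mathcal E^{(p)}_\mu(f)<\infty$. For equivariant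 $f,g$: $d_p(f,g)=\big(\int_{\Gamma\backslash X}d_Y(f(x),g(x))^p\,d\bar\nu(x)\big)^{1/p}$. *)

(* Defs.v *)
From HB Require Import structures.
From mathcomp Require Import all_boot all_order all_algebra.
From mathcomp Require Import all_classical all_reals all_analysis.
Set Implicit Arguments. Unset Strict Implicit. Unset Printing Implicit Defensive.
Import Order.TTheory GRing.Theory Num.Theory.
Local Open Scope classical_set_scope.
Local Open Scope ring_scope.

Definition is_group (G : Type) (mul : G -> G -> G) (one : G) (inv : G -> G) :=
  [/\ forall a b c, mul a (mul b c) = mul (mul a b) c,
      forall a, mul one a = a &
      forall a, mul (inv a) a = one].

Definition is_action (G T : Type) (mul : G -> G -> G) (one : G)
  (act : G -> T -> T) :=
  (forall t, act one t = t) /\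
  (forall g h t, act (mul g h) t = act g (act h t)).

Definition free_action (G T : Type) (one : G) (act : G -> T -> T) :=
  forall g t, act g t = t -> g = one.

Section Metric.
Context {R : realType} {Y : Type} (d : Y -> Y -> R).

Definition is_metric :=
  [/\ forall y z, 0 <= d y z,
      forall y z, d y z = 0 <-> y = z,
      forall y z, d y z = d z y &
      forall x y z, d x z <= d x y + d y z].

Definition complete_metric :=
  forall u : nat -> Y,
    (forall e : R, 0 < e -> exists N : nat, forall m n : nat,
        (N <= m)%N -> (N <= n)%N -> d (u m) (u n) < e) ->
    exists y : Y, forall e : R, 0 < e -> exists N : nat, forall n : nat,
        (N <= n)%N -> d (u n) y < e.

Definition cs_geodesic (y z : Y) (gam : R -> Y) :=
  [/\ gam 0 = y, gam 1 = z &
      forall s t : R, 0 <= s <= 1 -> 0 <= t <= 1 ->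
        d (gam s) (gam t) = `|s - t| * d y z].

Definition geodesic_space := forall y z : Y, exists gam, cs_geodesic y z gam.

Definition p_uniformly_convex (p c : R) :=
  forall (x y z : Y) (gam : R -> Y), cs_geodesic y z gam ->
  forall t : R, 0 <= t <= 1 ->
    d x (gam t) `^ p <=
      (1 - t) * d x y `^ p + t * d x z `^ p
      - c `^ p * t * (1 - t) * d y z `^ p.

Definition isometric_action (G : Type) (act : G -> Y -> Y) :=
  forall g y z, d (act g y) (act g z) = d y z.
End Metric.

Section Walks.
Context {R : realType} {X : choiceType}.

(* mu x x' = mu(x -> x') *)
Definition random_walk (mu : X -> X -> R) :=
  forall x, [/\ forall x', 0 <= mu x x',
                finite_set [set x' | mu x x' != 0] &
                (\esum_(x' in setT) (mu x x')%:E = 1)%E].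

Definition equivariant_walk (G : Type) (act : G -> X -> X) (mu : X -> X -> R) :=
  forall g x x', mu (act g x) (act g x') = mu x x'.

Fixpoint mupow (mu : X -> X -> R) (n : nat) : X -> X -> \bar R :=
  match n with
  | 0%N => fun x x' => (if `[< x = x' >] then 1 else 0)%:E
  | n'.+1 => fun x x'' =>
      (\esum_(x' in setT) (mupow mu n' x x' * (mu x' x'')%:E))%E
  end.

Definition equivariant_map (G Y : Type) (actX : G -> X -> X) (actY : G -> Y -> Y)
  (f : X -> Y) := forall g x, f (actX g x) = actY g (f x).

(* Integrals over Gamma\X w.r.t. the discrete probability measure nubar on the
   orbit type Q; rep q is a chosen point of the orbit q (integrands are
   Gamma-invariant, so the choice is irrelevant). *)
Context {Q : choiceType} {Y : Type}.

Definition energy (d : Y -> Y -> R) (p : R) (nubar : Q -> R) (rep : Q -> X)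
  (eta : X -> X -> \bar R) (f : X -> Y) : \bar R :=
  ((2^-1)%:E *
   \esum_(q in setT) ((nubar q)%:E *
      \esum_(x' in setT) (eta (rep q) x' * (d (f (rep q)) (f x') `^ p)%:E)))%E.

Definition dist_p (d : Y -> Y -> R) (p : R) (nubar : Q -> R) (rep : Q -> X)
  (f g : X -> Y) : \bar R :=
  (poweR (\esum_(q in setT) (nubar q * d (f (rep q)) (g (rep q)) `^ p)%:E)
     p^-1)%E.

Definition in_B (G : Type) (actX : G -> X -> X) (actY : G -> Y -> Y)
  (d : Y -> Y -> R) (p : R) (nubar : Q -> R) (rep : Q -> X)
  (mu : X -> X -> R) (f : X -> Y) :=
  equivariant_map actX actY f /\
  (energy d p nubar rep (fun x x' => (mu x x')%:E) f < +oo)%E.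
End Walks.

(* Main.v *)
Require Import Defs.
From HB Require Import structures.
From mathcomp Require Import all_boot all_order all_algebra.
From mathcomp Require Import all_classical all_reals all_analysis.
From mathcomp Require Import lra ring.
Import Order.TTheory GRing.Theory Num.Theory.
Local Open Scope classical_set_scope.
Local Open Scope ring_scope.

Section gen.
Local Open Scope ereal_scope.

Lemma esumZl_ (R : realType) (T : choiceType) (S : set T) (a : T -> \bar R) (r : R) :
  (0 <= r)%R -> (forall x, 0 <= a x) ->
  \esum_(i in S) (r%:E * a i) = r%:E * \esum_(i in S) a i.
Proof.
move=> r0 a0; rewrite /esum -ereal_supZl //; last first.
  by apply/set0P; exists 0; exists set0; [exact: fsets_set0|rewrite fsbig_set0].
congr ereal_sup; apply/seteqP; split=> x /=.
  move=> [A HA <-]; exists (\sum_(i \in A) a i); first by exists A.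
  by rewrite ge0_mule_fsumr.
move=> [y [A HA <-] <-]; exists A => //.
by rewrite ge0_mule_fsumr.
Qed.

Lemma esumZr_ (R : realType) (T : choiceType) (S : set T) (a : T -> \bar R) (r : R) :
  (0 <= r)%R -> (forall x, 0 <= a x) ->
  \esum_(i in S) (a i * r%:E) = (\esum_(i in S) a i) * r%:E.
Proof.
move=> r0 a0; rewrite muleC -esumZl_ //; apply: eq_esum => i _; exact: muleC.
Qed.

Lemma esum_indic (R : realType) (T : choiceType) (x : T) (F : T -> \bar R) :
  (forall y, 0 <= F y) ->
  \esum_(y in setT) ((if `[< x = y >] then 1 else 0)%:E * F y) = F x.
Proof.
move=> F0.
rewrite (esumID [set x]); last by move=> i _; case: ifP => _; rewrite ?mul1e ?mul0e.
rewrite setTI esum_set1; last by case: ifP => _; rewrite ?mul1e ?mul0e.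
rewrite esum1 ?adde0; first by rewrite asboolT // mul1e.
move=> i [_ /= ix]; rewrite asboolF ?mul0e //; by move=> xi; apply: ix.
Qed.

Lemma esum_swap (R : realType) (T1 T2 : choiceType) (a : T1 -> T2 -> \bar R) :
  (forall i j, 0 <= a i j) ->
  \esum_(i in [set: T1]) \esum_(j in [set: T2]) a i j =
  \esum_(j in [set: T2]) \esum_(i in [set: T1]) a i j.
Proof.
move=> a0; rewrite !esum_esum //.
rewrite (reindex_esum ([set: T2] `*`` (fun=> [set: T1])) _ (fun x => (x.2, x.1))) //.
split => //=.
- by move=> [i1 i2] [j1 j2] /= _ _ [] -> ->.
- by move=> [i1 i2] _ /=; exists (i2, i1).
Qed.

End gen.

Lemma powR3 (R : realType) (a b c p : R) : (0 <= a)%R -> (0 <= b)%R -> (0 <= c)%R -> (0 <= p)%R ->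
  ((a + b + c) `^ p <= 3 `^ p * (a `^ p + b `^ p + c `^ p))%R.
Proof.
move=> a0 b0 c0 p0.
have key : forall m, (0 <= m)%R -> (a <= m)%R -> (b <= m)%R -> (c <= m)%R ->
   (m `^ p <= a `^ p + b `^ p + c `^ p)%R ->
   ((a + b + c) `^ p <= 3 `^ p * (a `^ p + b `^ p + c `^ p))%R.
  move=> m m0 am bm cm H.
  apply: (@le_trans _ _ ((3 * m) `^ p)).
    apply: ge0_ler_powR => //; rewrite ?nnegrE; lra.
  have h3 : (0 <= 3 :> R)%R by lra.
  rewrite powRM //.
  by rewrite ler_wpM2l // powR_ge0.
have pa := powR_ge0 a p; have pb := powR_ge0 b p; have pc := powR_ge0 c p.
have [ab|ba] := lerP a b.
  have [bc|cb] := lerP b c.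
    apply: (key c) => //; lra.
  apply: (key b) => //; lra.
have [ac|ca] := lerP a c.
  apply: (key c) => //; lra.
apply: (key a) => //; lra.
Qed.


Set Implicit Arguments. Unset Strict Implicit.

Section gen2.
Local Open Scope ereal_scope.

Lemma esum_ge1 (R : realType) (T : choiceType) (S : set T) (a : T -> \bar R) i :
  S i -> (forall x, 0 <= a x) -> a i <= \esum_(j in S) a j.
Proof.
move=> Si a0; apply: esum_ge; exists [set i]; last by rewrite fsbig_set1.
by split; [exact: finite_set1|move=> x ->].
Qed.

Lemma esumZe (R : realType) (T : choiceType) (S : set T) (a : T -> \bar R) (c : \bar R) :
  0 <= c -> (forall x, 0 <= a x) ->
  \esum_(i in S) (c * a i) = c * \esum_(i in S) a i.
Proof.
move=> c0 a0; case: c c0 => [r|_|//]; first by rewrite lee_fin => r0; exact: esumZl_.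
have [z|] := eqVneq (\esum_(i in S) a i) 0.
  have az : forall i, S i -> a i = 0.
    move=> i Si; apply/eqP; rewrite eq_le a0 andbT -z; exact: esum_ge1.
  by rewrite z mule0 esum1 // => i Si; rewrite az // mule0.
move=> nz.
have [[i Si ai]|H] := pselect (exists2 i, S i & 0 < a i); last first.
  move: nz; rewrite esum1 ?eqxx // => j Sj; apply/eqP; rewrite eq_le a0 andbT leNgt.
  by apply/negP => aj; apply: H; exists j.
have pos : 0 < \esum_(j in S) a j by rewrite (lt_le_trans ai) // esum_ge1.
rewrite gt0_mulye //; apply/eqP; rewrite eq_le leey /=.
have := @esum_ge1 R T S (fun j => +oo * a j) i Si.
rewrite gt0_mulye //; apply => x; exact: mule_ge0.
Qed.

End gen2.

Lemma grp_mulgV (G : Type) (mul : G -> G -> G) one inv :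
  is_group mul one inv -> forall a, mul a (inv a) = one.
Proof.
case=> A L I a.
have e1 : mul a (inv a) = mul (mul (inv (inv a)) (inv a)) (mul a (inv a)) by rewrite I L.
by rewrite e1 -A (A (inv a)) I L I.
Qed.

Lemma grp_mulg1 (G : Type) (mul : G -> G -> G) one inv :
  is_group mul one inv -> forall a, mul a one = a.
Proof.
move=> Gg a; have [A L I] := Gg.
by rewrite -(I a) A (grp_mulgV Gg) L.
Qed.

Lemma grp_invK (G : Type) (mul : G -> G -> G) one inv :
  is_group mul one inv -> forall a, inv (inv a) = a.
Proof.
move=> Gg a; have [A L I] := Gg.
by rewrite -[LHS](grp_mulg1 Gg) -(I a) A I L.
Qed.

Lemma act_cancel (G X : Type) (mul : G -> G -> G) one inv (act : G -> X -> X) :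
  is_group mul one inv -> is_action mul one act ->
  forall g x, act (inv g) (act g x) = x.
Proof. by move=> [A L I] [h1 hc] g x; rewrite -hc I h1. Qed.

Lemma act_cancel' (G X : Type) (mul : G -> G -> G) one inv (act : G -> X -> X) :
  is_group mul one inv -> is_action mul one act ->
  forall g x, act g (act (inv g) x) = x.
Proof. by move=> Gg [h1 hc] g x; rewrite -hc (grp_mulgV Gg) h1. Qed.

Lemma act_injx (G X : Type) (mul : G -> G -> G) one inv (act : G -> X -> X) :
  is_group mul one inv -> is_action mul one act ->
  forall g x y, act g x = act g y -> x = y.
Proof.
move=> Gg Ga g x y e.
by rewrite -(act_cancel Gg Ga g x) e (act_cancel Gg Ga).
Qed.

Lemma act_injg (G X : Type) (mul : G -> G -> G) one inv (act : G -> X -> X) :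
  is_group mul one inv -> is_action mul one act -> free_action one act ->
  forall g h x, act g x = act h x -> g = h.
Proof.
move=> Gg Ga Gf g h x e.
have [A L I] := Gg; have [h1 hc] := Ga.
have e2 : act (mul (inv h) g) x = x by rewrite hc e -hc I h1.
have := Gf _ _ e2 => E.
by rewrite -[g]L -(grp_mulgV Gg h) -A E (grp_mulg1 Gg).
Qed.

Lemma orb_act (G X Q : Type) (act : G -> X -> X) (orb : X -> Q) :
  (forall x x', orb x = orb x' <-> exists g, x' = act g x) ->
  forall g x, orb (act g x) = orb x.
Proof. by move=> Ho g x; symmetry; apply/Ho; exists g. Qed.

Section gen3.
Local Open Scope ereal_scope.

Lemma esum_partition (R : realType) (X Q : choiceType) (orb : X -> Q) (F : X -> \bar R) :
  (forall x, 0 <= F x) ->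
  \esum_(x in [set: X]) F x = \esum_(q in [set: Q]) \esum_(x in [set x | orb x = q]) F x.
Proof.
move=> F0; rewrite esum_esum //.
rewrite (reindex_esum ([set: Q] `*`` (fun q => [set x | orb x = q])) [set: X] snd F) //.
split.
- by move=> k _.
- move=> [q1 x1] [q2 x2]; rewrite !in_setE /= => -[_ h1] [_ h2] e; subst x2.

  by rewrite -h1 -h2.
- by move=> x _; exists (orb x, x).
Qed.

Lemma fiber_sum (R : realType) (G : Type) (mul : G -> G -> G) one inv
  (X Q : choiceType) (actX : G -> X -> X) (orb : X -> Q) (rep : Q -> X)
  (mu : X -> X -> R) :
  is_group mul one inv -> is_action mul one actX -> free_action one actX ->
  (forall q, orb (rep q) = q) ->
  (forall x x', orb x = orb x' <-> exists g, x' = actX g x) ->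
  random_walk mu -> equivariant_walk actX mu ->
  forall q', \esum_(x in [set x | orb x = q']) \esum_(q in [set: Q]) (mu x (rep q))%:E = 1.
Proof.
move=> Gg Ga Gf Hrep Horb Hrw Heq q'.
have gg : forall x, {g : G | x = actX g (rep (orb x))}.
  by move=> x; apply: cid; apply/Horb; rewrite Hrep.
pose a x := proj1_sig (gg x).
have ha : forall x, x = actX (a x) (rep (orb x)) := fun x => proj2_sig (gg x).
pose phi (k : X * Q) := actX (inv (a k.1)) (rep k.2).
rewrite esum_esum; last by move=> i j _ _; rewrite lee_fin; have [+ _ _] := Hrw i; apply.
transitivity (\esum_(k in [set x | orb x = q'] `*`` (fun=> [set: Q])) (mu (rep q') (phi k))%:E).
  apply: eq_esum => -[x q] [/= ox _]; rewrite /phi /=.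
  congr EFin; rewrite -(Heq (a x) (rep q')) (act_cancel' Gg Ga) -ox -ha //.
rewrite -(reindex_esum _ [set: X] phi (fun y => (mu (rep q') y)%:E)).
  by have [_ _ ->] := Hrw (rep q').
split.
- by move=> k.
- move=> [x1 q1] [x2 q2]; rewrite !in_setE /= => -[oo1 _] [oo2 _]; rewrite /phi /= => e.
  have eq : q1 = q2.
    by rewrite -(Hrep q1) -(Hrep q2) -(orb_act Horb (inv (a x1))) e (orb_act Horb).
  subst q2; have ei := act_injg Gg Ga Gf e.
  have ea : a x1 = a x2 by rewrite -(grp_invK Gg (a x1)) ei (grp_invK Gg).
  congr pair; by rewrite [LHS]ha [RHS]ha ea oo1 oo2.
- move=> y _.
  pose x := actX (inv (a y)) (rep q').
  have ox : orb x = q' by rewrite /x (orb_act Horb) Hrep.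
  exists (x, orb y) => //.
  have e : actX (a x) (rep q') = actX (inv (a y)) (rep q') by rewrite -[in LHS]ox -ha.
  have ei := act_injg Gg Ga Gf e.
  by rewrite /phi /= ei (grp_invK Gg) -ha.
Qed.


Lemma walk_inv (R : realType) (G : Type) (mul : G -> G -> G) one inv
  (X : choiceType) (actX : G -> X -> X) (mu : X -> X -> R) :
  is_group mul one inv -> is_action mul one actX ->
  equivariant_walk actX mu ->
  forall F : X -> X -> \bar R, (forall g y x, F (actX g y) (actX g x) = F y x) ->
  forall g y, \esum_(x in [set: X]) ((mu (actX g y) x)%:E * F (actX g y) x) =
              \esum_(x in [set: X]) ((mu y x)%:E * F y x).
Proof.
move=> Gg Ga Heq F HF g y.
rewrite (reindex_esum [set: X] [set: X] (actX g)).
  by apply: eq_esum => x _; rewrite Heq HF.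
split.
- by move=> x.
- by move=> x1 x2 _ _; apply: act_injx Gg Ga g x1 x2.
- by move=> x _; exists (actX (inv g) x) => //; rewrite (act_cancel' Gg Ga).
Qed.

Lemma stationary (R : realType) (G : Type) (mul : G -> G -> G) one inv
  (X Q : choiceType) (actX : G -> X -> X) (orb : X -> Q) (rep : Q -> X)
  (mu : X -> X -> R) (nubar : Q -> R) :
  is_group mul one inv -> is_action mul one actX -> free_action one actX ->
  (forall q, orb (rep q) = q) ->
  (forall x x', orb x = orb x' <-> exists g, x' = actX g x) ->
  random_walk mu -> equivariant_walk actX mu ->
  (forall q, (0 <= nubar q)%R) ->
  (forall x x', nubar (orb x) * mu x x' = nubar (orb x') * mu x' x)%R ->
  forall h : X -> \bar R, (forall x, 0 <= h x) -> (forall g x, h (actX g x) = h x) ->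
  \esum_(q in [set: Q]) ((nubar q)%:E * \esum_(x in [set: X]) ((mu (rep q) x)%:E * h x))
  = \esum_(q in [set: Q]) ((nubar q)%:E * h (rep q)).
Proof.
move=> Gg Ga Gf Hrep Horb Hrw Heq Hnu Hrev h h0 hinv.
have mu0 : forall x y, (0 <= mu x y)%R by move=> x y; have [+ _ _] := Hrw x; apply.
transitivity (\esum_(q in [set: Q]) \esum_(x in [set: X])
                 ((nubar q * mu (rep q) x)%:E * h x)).
  apply: eq_esum => q _; rewrite -esumZl_ //; last first.
    by move=> x; apply: mule_ge0; rewrite ?lee_fin.
  by apply: eq_esum => x _; rewrite muleA EFinM.
rewrite esum_swap; last by move=> q x; apply: mule_ge0; rewrite ?lee_fin ?mulr_ge0.
transitivity (\esum_(x in [set: X])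
   ((\esum_(q in [set: Q]) (mu x (rep q))%:E) * ((nubar (orb x))%:E * h x))).
  apply: eq_esum => x _; rewrite muleC -esumZe //; last first.
  - by move=> q; rewrite lee_fin.
  - by apply: mule_ge0; rewrite ?lee_fin.
  apply: eq_esum => q _.
  have := Hrev (rep q) x; rewrite Hrep => ->.
  by rewrite EFinM muleAC muleC.
rewrite (esum_partition orb); last first.
  move=> x; apply: mule_ge0; first by apply: esum_ge0 => q _; rewrite lee_fin.
  by apply: mule_ge0; rewrite ?lee_fin.
apply: eq_esum => q' _.
transitivity (\esum_(x in [set x | orb x = q'])
   ((\esum_(q in [set: Q]) (mu x (rep q))%:E) * ((nubar q')%:E * h (rep q')))).
  apply: eq_esum => x /= ox; rewrite ox; congr (_ * (_ * _)).
  have [g ->] : exists g, x = actX g (rep q') by apply/Horb; rewrite Hrep.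
  exact: hinv.
rewrite (eq_esum (fun x _ => muleC _ _)) esumZe //; last first.
- by move=> x; apply: esum_ge0 => q _; rewrite lee_fin.
- by apply: mule_ge0; rewrite ?lee_fin.
by rewrite (fiber_sum Gg Ga Gf Hrep Horb Hrw Heq) mule1.
Qed.

End gen3.

Section gen4.
Local Open Scope ereal_scope.

Lemma mupow_ge0 (R : realType) (X : choiceType) (mu : X -> X -> R) :
  (forall x y, (0 <= mu x y)%R) -> forall n x y, 0 <= mupow mu n x y.
Proof.
move=> mu0; elim=> [|n IH] x y /=; first by case: ifP.
by apply: esum_ge0 => z _; apply: mule_ge0; rewrite ?lee_fin.
Qed.

Lemma mupow_expand (R : realType) (X : choiceType) (mu : X -> X -> R) :
  (forall x y, (0 <= mu x y)%R) -> forall n x (u : X -> \bar R), (forall y, 0 <= u y) ->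
  \esum_(y in [set: X]) (mupow mu n.+1 x y * u y) =
  \esum_(z in [set: X]) (mupow mu n x z * \esum_(y in [set: X]) ((mu z y)%:E * u y)).
Proof.
move=> mu0 n x u u0 /=.
have m0 := mupow_ge0 mu0.
transitivity (\esum_(y in [set: X]) \esum_(z in [set: X]) (mupow mu n x z * ((mu z y)%:E * u y))).
  apply: eq_esum => y _; rewrite muleC -esumZe //; last first.
    by move=> z; apply: mule_ge0; rewrite ?lee_fin.
  by apply: eq_esum => z _; rewrite muleC muleA.
rewrite esum_swap; last by move=> y z; apply: mule_ge0 => //; apply: mule_ge0; rewrite ?lee_fin.
apply: eq_esum => z _; rewrite esumZe //.
by move=> y; apply: mule_ge0; rewrite ?lee_fin.
Qed.

Lemma stationary_n (R : realType) (G : Type) (mul : G -> G -> G) one inv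
  (X Q : choiceType) (actX : G -> X -> X) (orb : X -> Q) (rep : Q -> X)
  (mu : X -> X -> R) (nubar : Q -> R) :
  is_group mul one inv -> is_action mul one actX -> free_action one actX ->
  (forall q, orb (rep q) = q) ->
  (forall x x', orb x = orb x' <-> exists g, x' = actX g x) ->
  random_walk mu -> equivariant_walk actX mu ->
  (forall q, (0 <= nubar q)%R) ->
  (forall x x', nubar (orb x) * mu x x' = nubar (orb x') * mu x' x)%R ->
  forall n (h : X -> \bar R), (forall x, 0 <= h x) -> (forall g x, h (actX g x) = h x) ->
  \esum_(q in [set: Q]) ((nubar q)%:E * \esum_(x in [set: X]) (mupow mu n (rep q) x * h x))
  = \esum_(q in [set: Q]) ((nubar q)%:E * h (rep q)).
Proof.
move=> Gg Ga Gf Hrep Horb Hrw Heq Hnu Hrev.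
have mu0 : forall x y, (0 <= mu x y)%R by move=> x y; have [+ _ _] := Hrw x; apply.
elim=> [|n IH] h h0 hinv.
  by apply: eq_esum => q _; rewrite /= esum_indic.
transitivity (\esum_(q in [set: Q]) ((nubar q)%:E * \esum_(z in [set: X])
    (mupow mu n (rep q) z * \esum_(y in [set: X]) ((mu z y)%:E * h y)))).
  by apply: eq_esum => q _; rewrite mupow_expand.
rewrite IH.
- exact: (stationary Gg Ga Gf Hrep Horb Hrw Heq Hnu Hrev h0 hinv).
- by move=> z; apply: esum_ge0 => y _; apply: mule_ge0; rewrite ?lee_fin.
- move=> g z.
  exact: (walk_inv Gg Ga Heq (F := fun _ y => h y)).
Qed.

End gen4.

Lemma dpow3 (R : realType) (Y : Type) (d : Y -> Y -> R) (p : R) :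
  is_metric d -> 0 <= p -> forall a b c e,
  d a e `^ p <= 3 `^ p * (d b a `^ p + d b c `^ p + d c e `^ p).
Proof.
move=> [d0 dz ds dt] p0 a b c e.
have h : d a e <= d b a + d b c + d c e.
  have := dt a b e; have := dt b c e; rewrite (ds a b); lra.
apply: le_trans (@powR3 R (d b a) (d b c) (d c e) p (d0 _ _) (d0 _ _) (d0 _ _) p0).
by apply: ge0_ler_powR => //; rewrite nnegrE // !addr_ge0.
Qed.

Lemma esum3 (R : realType) (T : choiceType) (S : set T) (c : R) (u v w : T -> R) :
  0 <= c -> (forall x, 0 <= u x) -> (forall x, 0 <= v x) -> (forall x, 0 <= w x) ->
  (\esum_(x in S) (c * (u x + v x + w x))%:E =
   c%:E * (\esum_(x in S) (u x)%:E + \esum_(x in S) (v x)%:E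
           + \esum_(x in S) (w x)%:E))%E.
Proof.
move=> c0 u0 v0 w0.
rewrite (eq_esum (fun x _ => EFinM c _)) esumZl_ //; last first.
  by move=> x; rewrite lee_fin; have := u0 x; have := v0 x; have := w0 x; lra.
congr (_ * _)%E.
rewrite (eq_esum (fun x _ => EFinD _ _)) esumD; try by move=> x _; rewrite lee_fin; have := u0 x; have := v0 x; have := w0 x; lra.
rewrite (eq_esum (fun x _ => EFinD _ _)) esumD; try by move=> x _; rewrite lee_fin; have := u0 x; have := v0 x; have := w0 x; lra.
done.
Qed.

Lemma dblE (R : realType) (Q X : choiceType) (n : Q -> R) (m v : Q -> X -> R) :
  (forall q, 0 <= n q) -> (forall q x, 0 <= m q x) -> (forall q x, 0 <= v q x) ->
  (\esum_(q in [set: Q]) ((n q)%:E * \esum_(x in [set: X]) ((m q x)%:E * (v q x)%:E)) =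
   \esum_(k in [set: Q] `*`` (fun=> [set: X])) (n k.1 * (m k.1 k.2 * v k.1 k.2))%:E)%E.
Proof.
move=> n0 m0 v0; rewrite -(esum_esum (a := fun q x => (n q * (m q x * v q x))%:E)); last by move=> q x _ _; rewrite lee_fin !mulr_ge0.
apply: eq_esum => q _; rewrite -esumZl_ //; last by move=> x; rewrite lee_fin mulr_ge0.
Qed.

Lemma part1_dir (R : realType) (p : R) (Y : Type) (d : Y -> Y -> R)
  (G : Type) (mul : G -> G -> G) (one : G) (inv : G -> G)
  (X Q : choiceType) (actX : G -> X -> X) (actY : G -> Y -> Y)
  (orb : X -> Q) (rep : Q -> X) (mu : X -> X -> R) (nubar : Q -> R) :
  is_group mul one inv -> is_action mul one actX -> free_action one actX ->
  is_metric d -> isometric_action d actY -> 0 <= p ->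
  (forall q, orb (rep q) = q) ->
  (forall x x', orb x = orb x' <-> exists g, x' = actX g x) ->
  random_walk mu -> equivariant_walk actX mu ->
  (forall q, 0 <= nubar q) ->
  (forall x x', nubar (orb x) * mu x x' = nubar (orb x') * mu x' x) ->
  forall f g : X -> Y, equivariant_map actX actY f -> equivariant_map actX actY g ->
  (\esum_(q in [set: Q]) (nubar q * d (f (rep q)) (g (rep q)) `^ p)%:E < +oo)%E ->
  (\esum_(q in [set: Q]) ((nubar q)%:E * \esum_(x in [set: X])
      ((mu (rep q) x)%:E * (d (f (rep q)) (f x) `^ p)%:E)) < +oo)%E ->
  (\esum_(q in [set: Q]) ((nubar q)%:E * \esum_(x in [set: X])
      ((mu (rep q) x)%:E * (d (g (rep q)) (g x) `^ p)%:E)) < +oo)%E.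
Proof.
move=> Gg Ga Gf Hd Hiso p0 Hrep Horb Hrw Heq Hnu Hrev f g ef eg HS HE.
have mu0 : forall x y, (0 <= mu x y)%R by move=> x y; have [+ _ _] := Hrw x; apply.
have [d0 _ _ _] := Hd.
set c := 3 `^ p.
have c0 : 0 <= c by exact: powR_ge0.
pose A q := d (f (rep q)) (g (rep q)) `^ p.
pose t1 (k : Q * X) := nubar k.1 * (mu (rep k.1) k.2 * A k.1).
pose t2 (k : Q * X) := nubar k.1 * (mu (rep k.1) k.2 * d (f (rep k.1)) (f k.2) `^ p).
pose t3 (k : Q * X) := nubar k.1 * (mu (rep k.1) k.2 * d (f k.2) (g k.2) `^ p).
have n1 : forall k, 0 <= t1 k by move=> k; rewrite /t1 !mulr_ge0 // powR_ge0.
have n2 : forall k, 0 <= t2 k by move=> k; rewrite /t2 !mulr_ge0 // powR_ge0.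
have n3 : forall k, 0 <= t3 k by move=> k; rewrite /t3 !mulr_ge0 // powR_ge0.
rewrite dblE //; last by move=> *; exact: powR_ge0.
apply: (@le_lt_trans _ _ (\esum_(k in [set: Q] `*`` (fun=> [set: X]))
                             (c * (t1 k + t2 k + t3 k))%:E)%E).
  apply: le_esum => k _; rewrite lee_fin.
  have H := dpow3 Hd p0 (g (rep k.1)) (f (rep k.1)) (f k.2) (g k.2).
  have -> : c * (t1 k + t2 k + t3 k) = nubar k.1 * (mu (rep k.1) k.2 *
     (c * (d (f (rep k.1)) (g (rep k.1)) `^ p + d (f (rep k.1)) (f k.2) `^ p
           + d (f k.2) (g k.2) `^ p))) by rewrite /t1 /t2 /t3 /A; ring.
  by apply: ler_wpM2l => //; apply: ler_wpM2l.
rewrite esum3 //.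
have E2 : (\esum_(k in [set: Q] `*`` (fun=> [set: X])) (t2 k)%:E < +oo)%E.
  by rewrite /t2 -(dblE (n := nubar) (m := fun q x => mu (rep q) x) (v := fun q x => d (f (rep q)) (f x) `^ p)) // => *; exact: powR_ge0.
have E1 : (\esum_(k in [set: Q] `*`` (fun=> [set: X])) (t1 k)%:E < +oo)%E.
  have EE := @dblE R Q X nubar (fun q x => mu (rep q) x) (fun q x => A q) Hnu
     (fun q x => mu0 _ _) (fun q x => powR_ge0 _ _).
  rewrite /= in EE; rewrite -EE.
  have EE2 : (\esum_(q in [set: Q]) ((nubar q)%:E *
      \esum_(x in [set: X]) ((mu (rep q) x)%:E * (A q)%:E)) =
      \esum_(q in [set: Q]) (nubar q * A q)%:E)%E.
    apply: eq_esum => q _; rewrite EFinM; congr (_ * _)%E.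
    rewrite esumZr_; [|exact: powR_ge0|by move=> x; rewrite lee_fin].
    by have [_ _ ->] := Hrw (rep q); rewrite mul1e.
  by rewrite EE2.
have E3 : (\esum_(k in [set: Q] `*`` (fun=> [set: X])) (t3 k)%:E < +oo)%E.
  have EE := @dblE R Q X nubar (fun q x => mu (rep q) x) (fun q x => d (f x) (g x) `^ p) Hnu
     (fun q x => mu0 _ _) (fun q x => powR_ge0 _ _).
  rewrite /= in EE; rewrite -EE.
  have hinv : forall h x, (d (f (actX h x)) (g (actX h x)) `^ p)%:E = (d (f x) (g x) `^ p)%:E.
    by move=> h x; rewrite ef eg Hiso.
  have h0 : forall x, (0 <= (d (f x) (g x) `^ p)%:E)%E.
    by move=> x; rewrite lee_fin; exact: powR_ge0.
  rewrite (stationary Gg Ga Gf Hrep Horb Hrw Heq Hnu Hrev h0 hinv).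
  by rewrite (eq_esum (fun q _ => esym (EFinM _ _))).
apply: lte_mul_pinfty.
- by rewrite lee_fin.
- by [].
- by apply: lte_add_pinfty => //; apply: lte_add_pinfty.
Qed.

Lemma part2 (R : realType) (p : R) (Y : Type) (d : Y -> Y -> R)
  (G : Type) (mul : G -> G -> G) (one : G) (inv : G -> G)
  (X Q : choiceType) (actX : G -> X -> X) (actY : G -> Y -> Y)
  (orb : X -> Q) (rep : Q -> X) (mu : X -> X -> R) (nubar : Q -> R) :
  is_group mul one inv -> is_action mul one actX -> free_action one actX ->
  is_metric d -> isometric_action d actY -> 0 < p ->
  (forall q, orb (rep q) = q) ->
  (forall x x', orb x = orb x' <-> exists g, x' = actX g x) ->
  random_walk mu -> equivariant_walk actX mu ->
  (forall q, 0 <= nubar q) ->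
  (forall x x', nubar (orb x) * mu x x' = nubar (orb x') * mu x' x) ->
  forall f : X -> Y, equivariant_map actX actY f ->
  (\esum_(q in [set: Q]) ((nubar q)%:E * \esum_(x in [set: X])
      ((mu (rep q) x)%:E * (d (f (rep q)) (f x) `^ p)%:E)) < +oo)%E ->
  forall n,
  (\esum_(q in [set: Q]) ((nubar q)%:E * \esum_(x in [set: X])
      (mupow mu n (rep q) x * (d (f (rep q)) (f x) `^ p)%:E)) < +oo)%E.
Proof.
move=> Gg Ga Gf Hd Hiso pgt0 Hrep Horb Hrw Heq Hnu Hrev f ef HE.
have mu0 : forall x y, (0 <= mu x y)%R by move=> x y; have [+ _ _] := Hrw x; apply.
have [d0 dz _ _] := Hd.
have p0 : 0 <= p by exact: ltW.
have pn0 : p != 0 by rewrite gt_eqF.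
have m0 := mupow_ge0 mu0.
set c := 3 `^ p.
have c0 : 0 <= c by exact: powR_ge0.
pose D x y := (d (f x) (f y) `^ p)%:E.
have D0 : forall x y, (0 <= D x y)%E by move=> x y; rewrite lee_fin; exact: powR_ge0.
pose k z := (\esum_(y in [set: X]) ((mu z y)%:E * D z y))%E.
have k0 : forall z, (0 <= k z)%E.
  by move=> z; apply: esum_ge0 => y _; apply: mule_ge0; [rewrite lee_fin; exact: mu0|exact: D0].
have kinv : forall g z, k (actX g z) = k z.
  move=> g z; rewrite /k; apply: (walk_inv Gg Ga Heq (F := D)).
  by move=> h y x; rewrite /D ef ef Hiso.
elim=> [|n IH].
  rewrite (eq_esum (b := fun q => 0%E)); first by rewrite esum1.
  move=> q _ /=; rewrite esum_indic; last exact: D0.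
  by rewrite (_ : d _ _ = 0) ?powR0 ?mule0 //; apply/dz.
have bnd : forall x, (\esum_(y in [set: X]) (mupow mu n.+1 x y * D x y) <=
    c%:E * (\esum_(z in [set: X]) (mupow mu n x z * D x z) +
            \esum_(z in [set: X]) (mupow mu n x z * k z)))%E.
  move=> x; rewrite (mupow_expand mu0 n x (D0 x)).
  rewrite -esumD; [|by move=> z _; apply: mule_ge0|by move=> z _; apply: mule_ge0].
  rewrite -esumZe; [|by rewrite lee_fin|by move=> z; apply: adde_ge0; apply: mule_ge0].
  apply: le_esum => z _.
  rewrite -ge0_muleDr; [|exact: D0|exact: k0].
  rewrite muleCA; apply: lee_wpmul2l; first exact: m0.
  apply: (@le_trans _ _ (\esum_(y in [set: X])
      (c%:E * ((mu z y)%:E * D x z + (mu z y)%:E * D z y)))%E).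
    apply: le_esum => y _; rewrite /D /= -!EFinM lee_fin.
    have H := dpow3 Hd p0 (f x) (f x) (f z) (f y).
    rewrite (_ : d (f x) (f x) = 0) in H; last by apply/dz.
    rewrite (powR0 pn0) add0r in H.
    rewrite -mulrDr mulrCA; apply: ler_wpM2l; first exact: mu0.
    exact: H.
  have nA : forall y, (0 <= (mu z y)%:E * D x z)%E.
    by move=> y; apply: mule_ge0; [rewrite lee_fin; exact: mu0|exact: D0].
  have nB : forall y, (0 <= (mu z y)%:E * D z y)%E.
    by move=> y; apply: mule_ge0; [rewrite lee_fin; exact: mu0|exact: D0].
  have -> : (\esum_(y in [set: X]) (c%:E * ((mu z y)%:E * D x z + (mu z y)%:E * D z y)) =
     c%:E * \esum_(y in [set: X]) ((mu z y)%:E * D x z + (mu z y)%:E * D z y))%E.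
    by apply: esumZe; [rewrite lee_fin|move=> y; apply: adde_ge0].
  have -> : (\esum_(y in [set: X]) ((mu z y)%:E * D x z + (mu z y)%:E * D z y) =
     \esum_(y in [set: X]) ((mu z y)%:E * D x z) + k z)%E.
    by apply: esumD => y _.
  have -> : (\esum_(y in [set: X]) ((mu z y)%:E * D x z) =
     (\esum_(y in [set: X]) (mu z y)%:E) * D x z)%E.
    by apply: esumZr_; [exact: powR_ge0|move=> y; rewrite lee_fin].
  by have [_ _ ->] := Hrw z; rewrite mul1e.
apply: (@le_lt_trans _ _ (\esum_(q in [set: Q]) ((nubar q)%:E * (c%:E *
    (\esum_(z in [set: X]) (mupow mu n (rep q) z * D (rep q) z) +
     \esum_(z in [set: X]) (mupow mu n (rep q) z * k z)))))%E).
  apply: le_esum => q _; apply: lee_wpmul2l; [by rewrite lee_fin|exact: bnd].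
have e1 : forall q, (0 <= \esum_(z in [set: X]) (mupow mu n (rep q) z * D (rep q) z))%E.
  by move=> q; apply: esum_ge0 => z _; apply: mule_ge0.
have e2 : forall q, (0 <= \esum_(z in [set: X]) (mupow mu n (rep q) z * k z))%E.
  by move=> q; apply: esum_ge0 => z _; apply: mule_ge0.
rewrite (eq_esum (b := fun q => (c%:E * ((nubar q)%:E *
    (\esum_(z in [set: X]) (mupow mu n (rep q) z * D (rep q) z)) +
    (nubar q)%:E * (\esum_(z in [set: X]) (mupow mu n (rep q) z * k z))))%E)); last first.
  by move=> q _; rewrite muleCA (ge0_muleDr _ (e1 q) (e2 q)).
rewrite esumZl_; [|exact: c0|by move=> q; apply: adde_ge0; apply: mule_ge0; rewrite ?lee_fin].
rewrite esumD; [|by move=> q _; apply: mule_ge0; rewrite ?lee_fin|by move=> q _; apply: mule_ge0; rewrite ?lee_fin].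
rewrite (stationary_n Gg Ga Gf Hrep Horb Hrw Heq Hnu Hrev n k0 kinv).
apply: lte_mul_pinfty.
- by rewrite lee_fin.
- by [].
- by apply: lte_add_pinfty.
Qed.

Lemma half_fin (R : realType) (x : \bar R) : (0 <= x)%E ->
  (((2^-1)%:E * x < +oo) <-> (x < +oo))%E.
Proof.
move=> x0; have h2 : (0 < 2^-1 :> R) by rewrite invr_gt0 ltr0n.
split.
- move=> h; rewrite ltNge leye_eq; apply/negP => /eqP E; move: h.
  by rewrite E gt0_muley ?ltxx // lte_fin.
- by move=> h; apply: lte_mul_pinfty => //; rewrite lee_fin ltW.
Qed.
Arguments half_fin {R x}.

Unset Implicit Arguments. Set Strict Implicit.

Theorem lemma3p6
  (R : realType) (p cY : R)
  (Y : Type) (d : Y -> Y -> R)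
  (G : Type) (mul : G -> G -> G) (one : G) (inv : G -> G)
  (X Q : choiceType) (actX : G -> X -> X) (actY : G -> Y -> Y)
  (orb : X -> Q) (rep : Q -> X)
  (mu : X -> X -> R) (nubar : Q -> R) :
  2 <= p -> 0 < cY ->
  is_metric d -> complete_metric d -> geodesic_space d ->
  p_uniformly_convex d p cY ->
  is_group mul one inv ->
  is_action mul one actX -> free_action one actX ->
  is_action mul one actY -> isometric_action d actY ->
  (forall q, orb (rep q) = q) ->
  (forall x x', orb x = orb x' <-> exists g, x' = actX g x) ->
  random_walk mu -> equivariant_walk actX mu ->
  (forall q, 0 <= nubar q) -> (\esum_(q in setT) (nubar q)%:E = 1)%E ->
  (forall x x', nubar (orb x) * mu x x' = nubar (orb x') * mu x' x) ->
  (forall f g : X -> Y, equivariant_map actX actY f -> equivariant_map actX actY g ->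
     (dist_p d p nubar rep f g < +oo)%E ->
     (in_B actX actY d p nubar rep mu f <-> in_B actX actY d p nubar rep mu g))
  /\
  (forall f : X -> Y, in_B actX actY d p nubar rep mu f ->
     forall n : nat, (1 <= n)%N -> (energy d p nubar rep (mupow mu n) f < +oo)%E).
Proof.
move=> p2 cY0 Hd Hc Hg Hu Gg Ga Gf GaY Hiso Hrep Horb Hrw Heq Hnu Hnu1 Hrev.
have p0 : 0 <= p by lra.
have pgt0 : 0 < p by lra.
have [d0 _ ds _] := Hd.
have mu0 : forall x y, (0 <= mu x y)%R by move=> x y; have [+ _ _] := Hrw x; apply.
have mu0E : forall x y, (0 <= (mu x y)%:E)%E by move=> x y; rewrite lee_fin.
have nnE : forall (f : X -> Y) (eta : X -> X -> \bar R), (forall x y, 0 <= eta x y)%E ->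
   (0 <= \esum_(q in [set: Q]) ((nubar q)%:E * \esum_(x in [set: X])
      (eta (rep q) x * (d (f (rep q)) (f x) `^ p)%:E)))%E.
  move=> f eta e0; apply: esum_ge0 => q _; apply: mule_ge0; first by rewrite lee_fin.
  by apply: esum_ge0 => x _; apply: mule_ge0 => //; rewrite lee_fin powR_ge0.
split.
- move=> f g ef eg Hdist.
  have HS : forall f g : X -> Y, (dist_p d p nubar rep f g < +oo)%E ->
      (\esum_(q in [set: Q]) (nubar q * d (f (rep q)) (g (rep q)) `^ p)%:E < +oo)%E.
    move=> f1 g1 H; rewrite ltNge leye_eq; apply/negP => /eqP E; move: H.
    rewrite /dist_p E poweRyr ?ltxx //.
    by rewrite invr_neq0 // gt_eqF.
  have Hfg := HS f g Hdist.
  have Hgf : (\esum_(q in [set: Q]) (nubar q * d (g (rep q)) (f (rep q)) `^ p)%:E < +oo)%E.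
    by rewrite (eq_esum (b := fun q => (nubar q * d (f (rep q)) (g (rep q)) `^ p)%:E)) // => q _; rewrite ds.
  have nn1 : forall f : X -> Y, (0 <= \esum_(q in [set: Q]) ((nubar q)%:E * \esum_(x in [set: X])
      ((mu (rep q) x)%:E * (d (f (rep q)) (f x) `^ p)%:E)))%E.
    by move=> f1; exact: (nnE f1 (fun x y => (mu x y)%:E) mu0E).
  split => -[_ HE].
  + split; first exact: eg.
    rewrite /energy in HE *; apply/half_fin; first exact: nn1.
    have HE' := proj1 (half_fin (nn1 f)) HE.
    exact: (part1_dir Gg Ga Gf Hd Hiso p0 Hrep Horb Hrw Heq Hnu Hrev ef eg Hfg HE').
  + split; first exact: ef.
    rewrite /energy in HE *; apply/half_fin; first exact: nn1.
    have HE' := proj1 (half_fin (nn1 g)) HE.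
    exact: (part1_dir Gg Ga Gf Hd Hiso p0 Hrep Horb Hrw Heq Hnu Hrev eg ef Hgf HE').
- move=> f [ef HE] n _; rewrite /energy in HE *.
  apply/half_fin; first by apply: nnE; exact: mupow_ge0.
  have HE' := proj1 (half_fin (nnE f (fun x y => (mu x y)%:E) mu0E)) HE.
  exact: (part2 Gg Ga Gf Hd Hiso pgt0 Hrep Horb Hrw Heq Hnu Hrev ef HE').
Qed.
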